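(* For every fixed positive integer $c$, and for every positive integer $k$ large enough compared to $c$, there exists a tournament $T$ on $2k+c$ vertices such that $\mathrm{sinv}'_k(T) > \frac{1}{2}\log(2k+c) - \log(2c)$. In particular, for every fixed positive integer $c$, $m'_k(2k+c)$ is unbounded as $k\to\infty$.
   Context: Logarithms are to base 2. A tournament is an orientation of a complete graph. For a digraph $D$ and $X \subseteq V(D)$, inverting $X$ means reversing the direction of every arc of $D$ with both endvertices in $X$. A digraph $D$ is $k$-arc-strong if for every partition $(V_1,V_2)$ of $V(D)$ into nonempty sets there are at least $k$ arcs from $V_1$ to $V_2$. $\mathrm{sinv}'_k(D)$ is the minimum number of sets whose successive inversion transforms $D$ into a $k$-arc-strong digraph. For $n\ge 2k+1$, $m'_k(n)=\max\{\mathrm{sinv}'_k(T): T \text{ tournament of order } n\}$. *)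

(* Defs.v *)
From mathcomp Require Import all_boot.
From Stdlib Require Import Reals.
Set Implicit Arguments. Unset Strict Implicit. Unset Printing Implicit Defensive.

Definition digraph (n : nat) := rel 'I_n.

Definition is_tournament n (D : digraph n) : Prop :=
  (forall x, ~~ D x x) /\
  (forall x y, x != y -> (D x y || D y x) /\ ~~ (D x y && D y x)).

Definition invert n (D : digraph n) (X : {set 'I_n}) : digraph n :=
  fun x y => if (x \in X) && (y \in X) then D y x else D x y.

Definition invert_seq n (D : digraph n) (Xs : seq {set 'I_n}) : digraph n :=
  foldl (@invert n) D Xs.

Definition arcs_out n (D : digraph n) (V1 : {set 'I_n}) : nat :=
  #|[set p : 'I_n * 'I_n | [&& p.1 \in V1, p.2 \notin V1 & D p.1 p.2]]|.

Definition arc_strong n (k : nat) (D : digraph n) : Prop :=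
  forall V1 : {set 'I_n}, V1 != set0 -> V1 != setT -> k <= arcs_out D V1.

Definition sinv_achievable n (k m : nat) (D : digraph n) : Prop :=
  exists Xs : seq {set 'I_n}, size Xs = m /\ arc_strong k (invert_seq D Xs).

(* sinv'_k(D) > x  (sinv' is the minimum such m; it is +infinity if none exists). *)
Definition sinv_gt n (k : nat) (D : digraph n) (x : R) : Prop :=
  forall m, sinv_achievable k m D -> (x < INR m)%R.

Definition log2 (x : R) : R := (ln x / ln 2)%R.

(* m'_k(n) = max over tournaments T of order n of sinv'_k(T);
   "m'_k(n) > B" means some tournament of order n has sinv'_k > B. *)
Definition mprime_gt (k n B : nat) : Prop :=
  exists T : digraph n, is_tournament T /\ sinv_gt k T (INR B).

(* Main.v *)
Require Import Defs.
From mathcomp Require Import all_boot.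
From Stdlib Require Import Reals.
From mathcomp Require Import all_algebra.
From mathcomp Require Import zify ring.
From Stdlib Require Import Lia Lra.
Import ssrnat.
Set Implicit Arguments. Unset Strict Implicit. Unset Printing Implicit Defensive.

Lemma bin_up N s : (s.*2 < N)%N -> ('C(N, s) <= 'C(N, s.+1))%N.
Proof.
move=> h; have := mul_bin_left N s.
have h1 : (s.+1 <= N - s)%N by lia.
move=> E; rewrite -(@leq_pmul2l s.+1) // E.
by rewrite leq_mul2r h1 orbT.
Qed.

Lemma bin_max N s : ('C(N, s) <= 'C(N, N./2))%N.
Proof.
have HN := odd_double_half N.
have low : forall d s, s + d = N./2 -> ('C(N, s) <= 'C(N, N./2))%N.
  elim=> [|d IH] s0 H; first by rewrite -H addn0.
  apply: leq_trans (IH s0.+1 _); last by lia.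
  apply: bin_up; move: HN; rewrite -!muln2; lia.
case: (leqP s N./2) => h; first by apply: (low (N./2 - s)); lia.
case: (leqP s N) => h2; last by rewrite bin_small.
rewrite -bin_sub //; apply: (low (N./2 - (N - s))).
move: HN; rewrite -!muln2; lia.
Qed.

Lemma bin_even a : ('C(a.*2, a) ^ 2 * (a.*2).+1 <= 16 ^ a)%N.
Proof.
elim: a => [|a IH]; first by [].
have F1 := mul_bin_down (a.*2.+1) a.
have F2 := mul_bin_down (a.*2.+2) a.+1.
have F3 := mul_bin_left (a.*2.+1) a.
rewrite /= in F1 F2.
rewrite doubleS.
set B := 'C(a.*2, a) in IH F1.
set D := 'C(a.*2.+1, a) in F1 F3.
set E := 'C(a.*2.+1, a.+1) in F2 F3.
set B' := 'C(a.*2.+2, a.+1) in F2 *.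
rewrite expnS.
set X := 16 ^ a in IH *.
have hE : E = D.
  apply/eqP; rewrite -(eqn_pmul2l (ltn0Sn a)) F3; apply/eqP; congr muln; lia.
have F2' : a.*2.+2 * E = a.+1 * B' by rewrite F2; congr muln; lia.
have hB' : B' = D.*2.
  apply/eqP; rewrite -(eqn_pmul2l (ltn0Sn a)) -F2' hE; apply/eqP; rewrite -!muln2; lia.
have hD : a.+1 * D = a.*2.+1 * B by rewrite F1; congr muln; lia.
rewrite hB'.
rewrite -(@leq_pmul2r (a.+1 ^ 2)) ?expn_gt0 //.
have -> : D.*2 ^ 2 * (a.*2.+2).+1 * a.+1 ^ 2 = 4 * (a.+1 * D) ^ 2 * (a.*2.+3) by rewrite -!muln2; ring.
rewrite hD.
have -> : 4 * (a.*2.+1 * B) ^ 2 * (a.*2.+3) = (4 * (a.*2.+1) * (a.*2.+3)) * (B ^ 2 * (a.*2).+1) by rewrite -!muln2; ring.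
have -> : 16 ^ a.+1 * a.+1 ^ 2 = (16 * a.+1 ^ 2) * X by rewrite expnS /X; ring.
apply: leq_mul => //.
rewrite -!muln2; nia.
Qed.

Lemma bin_center N : ('C(N, N./2) ^ 2 * N.+1 <= 4 ^ N)%N.
Proof.
have HN := odd_double_half N.
set a := N./2 in HN *.
have H16 : 4 ^ (a.*2) = 16 ^ a by rewrite -muln2 mulnC expnM.
case: (odd N) HN => /= <-.
- have IH := bin_even a.
  have F1 := mul_bin_down (a.*2.+1) a.
  rewrite /= in F1.
  set B := 'C(a.*2, a) in IH F1.
  set D := 'C(a.*2.+1, a) in F1 *.
  have hD : a.+1 * D = a.*2.+1 * B by rewrite F1; congr muln; lia.
  rewrite add1n -(@leq_pmul2r (a.+1 ^ 2)) ?expn_gt0 //.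
  have -> : D ^ 2 * (a.*2.+2) * a.+1 ^ 2 = (a.+1 * D) ^ 2 * (a.*2.+2) by ring.
  rewrite hD.
  have -> : (a.*2.+1 * B) ^ 2 * (a.*2.+2) = ((a.*2.+1) * (a.*2.+2)) * (B ^ 2 * (a.*2).+1) by rewrite -!muln2; ring.
  have -> : 4 ^ (a.*2.+1) * a.+1 ^ 2 = (4 * a.+1 ^ 2) * 16 ^ a by rewrite expnS H16; ring.
  apply: leq_mul => //.
  rewrite -!muln2; nia.
- by rewrite add0n H16 bin_even.
Qed.


Lemma sum_nat_bool (T : finType) (b : pred T) : (\sum_(x : T) (b x : nat))%N = #|[set x | b x]|.
Proof.
by rewrite -sum1_card [RHS]big_mkcond /=; apply: eq_bigr => x _; rewrite inE; case: (b x).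
Qed.

Lemma sum_interval a c L : (\sum_(s < L) (((a <= s) && (s < a + c)) : nat) = minn L (a + c) - a)%N.
Proof.
elim: L => [|L IH]; first by rewrite big_ord0 min0n.
rewrite big_ord_recr /= IH.
case: (leqP a L) => h1; case: (ltnP L (a + c)) => h2 /=; lia.
Qed.

Lemma window_count (T : finType) (A : {set T}) (k c e : nat) :
  (\sum_(r : {set T}) (((r \subset A) && ((k <= #|r| + e) && (#|r| + e < k + c))) : nat)
    <= c * 'C(#|A|, #|A|./2))%N.
Proof.
set N := #|A|.
pose P s := (k <= s + e) && (s + e < k + c).
have E1 : (\sum_(r : {set T}) (((r \subset A) && P #|r|) : nat)
   = \sum_(r : {set T}) \sum_(s < N.+1) (((r \subset A) && (#|r| == s) && P s) : nat))%N.
  apply: eq_bigr => r _.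
  case: (boolP (r \subset A)) => rA /=; last by rewrite big1.
  have lt : (#|r| < N.+1)%N by rewrite ltnS subset_leq_card.
  rewrite (bigD1 (Ordinal lt)) //= eqxx /= big1 ?addn0 // => s ns.
  suff -> : (#|r| == s) = false by [].
  apply/negbTE; apply: contra ns => /eqP h; apply/eqP/val_inj => /=; by rewrite h.
rewrite E1 exchange_big /=.
have E2 : forall s : 'I_N.+1,
   (\sum_(r : {set T}) (((r \subset A) && (#|r| == s) && P s) : nat) = P s * 'C(N, s))%N.
  move=> s; case: (P s); rewrite ?mul1n ?mul0n.
    rewrite (eq_bigr (fun r : {set T} => ((r \subset A) && (#|r| == s) : nat))); last by move=> r _; rewrite andbT.
    by rewrite (sum_nat_bool (fun r : {set T} => (r \subset A) && (#|r| == s))) cards_draws.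
  by rewrite big1 // => r _; rewrite andbF.
under eq_bigr => s _ do rewrite E2.
apply: (@leq_trans (\sum_(s < N.+1) P s * 'C(N, N./2))).
  by apply: leq_sum => s _; apply: leq_mul => //; apply: bin_max.
rewrite -big_distrl /=; apply: leq_mul => //.
apply: (@leq_trans (\sum_(s < N.+1) (((k - e <= s) && (s < k - e + c)) : nat))).
  apply: leq_sum => s _; rewrite /P.
  case: (leqP k (s + e)) => h1; case: (ltnP (s + e) (k + c)) => h2 //=.
  have -> : (k - e <= s) by lia.
  have -> : (s < k - e + c) by lia.
  by [].
rewrite sum_interval; lia.
Qed.

Section Comb.
Variable n : nat.

Definition par (Xs : seq {set 'I_n}) (x y : 'I_n) : bool :=
  odd (count (fun X : {set 'I_n} => (x \in X) && (y \in X)) Xs).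

Lemma par_sym Xs x y : par Xs x y = par Xs y x.
Proof. by rewrite /par; congr odd; apply: eq_count => X; rewrite andbC. Qed.

Lemma invert_seqE (D : digraph n) Xs x y :
  invert_seq D Xs x y = if par Xs x y then D y x else D x y.
Proof.
elim: Xs D => [|X Xs IH] D //=.
rewrite /invert_seq /= -/(invert_seq _ _) IH /invert /par /=.
case: (x \in X); case: (y \in X) => //=; rewrite ?odd_add //=;
  case: (odd _) => //.
Qed.

Definition code := {ffun 'I_n * 'I_n -> bool}.

Definition tour (t : code) : digraph n :=
  fun x y => if (x < y)%N then t (x, y) else if (y < x)%N then ~~ t (y, x) else false.

Lemma tour_tournament t : is_tournament (tour t).
Proof.
split=> [x|x y]; first by rewrite /tour ltnn.
rewrite /tour => /negbTE nxy.
have : (x < y)%N || (y < x)%N.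
  by rewrite -neq_ltn; apply/negP => /eqP/val_inj/eqP; rewrite nxy.
case/orP=> h.
- by rewrite h (ltnNge y x) (ltnW h) /=; case: (t _).
- by rewrite h (ltnNge x y) (ltnW h) /=; case: (t _).
Qed.

Definition xorc (t : code) Xs : code := [ffun p => t p (+) par Xs p.1 p.2].

Lemma xorcK Xs : involutive (xorc ^~ Xs).
Proof. by move=> t; apply/ffunP => p; rewrite !ffunE addbK. Qed.

Lemma invert_tour t Xs x y : invert_seq (tour t) Xs x y = tour (xorc t Xs) x y.
Proof.
rewrite invert_seqE /tour !ffunE /=.
case: ltngtP => h.
- by rewrite par_sym; case: (par _ _ _); case: (t _).
- by case: (par _ _ _); case: (t _).
- by case: (par _ _ _).
Qed.


Definition od (t : code) (x : 'I_n) : nat := \sum_y (tour t x y : nat).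

Lemma od_split t x : od t x =
  \sum_(y : 'I_n) (((x < y)%N && t (x, y)) : nat) + \sum_(y : 'I_n) (((y < x)%N && ~~ t (y, x)) : nat).
Proof.
rewrite /od -big_split /=; apply: eq_bigr => y _; rewrite /tour.
by case: ltngtP => h //=; rewrite ?addn0 //; case: (t _).
Qed.

Definition U (j : 'I_n) := [set y : 'I_n | (j < y)%N].
Definition upd (t : code) (j : 'I_n) (r : {set 'I_n}) : code :=
  [ffun p : 'I_n * 'I_n => if (p.1 == j) && (j < p.2)%N then p.2 \in r else t p].
Definition rowj (t : code) (j : 'I_n) := [set y : 'I_n | (j < y)%N && t (j, y)].
Definition phi (j : 'I_n) (p : code * {set 'I_n}) :=
  (upd p.1 j p.2, rowj p.1 j :|: (p.2 :\: U j)).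

Lemma phiK j : involutive (phi j).
Proof.
case=> t r; rewrite /phi /=; congr pair.
- apply/ffunP => [[a b]]; rewrite !ffunE /=.
  case: eqP => [-> |] //=; case: ltnP => h //=.
  by rewrite !inE h /= orbF.
- apply/setP => y; rewrite !inE ffunE /= eqxx.
  by case: ltnP => h /=; rewrite ?andbF ?orbF ?andbT.
Qed.

Definition Pgood k c t x := (k <= od t x)%N && (od t x < k + c)%N.
Definition Q k c (j : nat) (t : code) := [forall x : 'I_n, (x < j)%N ==> Pgood k c t x].

Lemma tour_upd_lt t (j : 'I_n) r (x y : 'I_n) : (x < j)%N -> tour (upd t j r) x y = tour t x y.
Proof.
move=> xj; rewrite /tour !ffunE /=.
have -> : (x == j) = false by apply/negbTE; rewrite neq_ltn xj.
case: ltngtP => h //=.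
have -> : (y == j) = false by apply/negbTE; rewrite neq_ltn (ltn_trans h xj).
by [].
Qed.

Lemma od_upd_lt t (j : 'I_n) r (x : 'I_n) : (x < j)%N -> od (upd t j r) x = od t x.
Proof. by move=> xj; apply: eq_bigr => y _; rewrite tour_upd_lt. Qed.

Lemma card_sum (A : {set 'I_n}) : #|A| = \sum_(y : 'I_n) ((y \in A) : nat).
Proof. by rewrite -sum1_card big_mkcond /=; apply: eq_bigr => y _; case: (y \in A). Qed.

Lemma od_upd_j t (j : 'I_n) (r : {set 'I_n}) : r \subset U j ->
  od (upd t j r) j = #|r| + \sum_(y : 'I_n) (((y < j)%N && ~~ t (y, j)) : nat).
Proof.
move=> /subsetP rU; rewrite od_split card_sum; congr addn; apply: eq_bigr => y _.
- rewrite ffunE /= eqxx; case: ltnP => h //=.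
  by case yr: (y \in r) => //; move: (rU _ yr); rewrite inE ltnNge h.
- rewrite ffunE /=; case: ltnP => h //=.
  by have -> : (y == j) = false by apply/negbTE; rewrite neq_ltn h.
Qed.

Lemma Q_upd k c t (j : 'I_n) (r : {set 'I_n}) : Q k c j (upd t j r) = Q k c j t.
Proof.
apply: eq_forallb => x; case: ltnP => h //=.
by rewrite /Pgood od_upd_lt.
Qed.

Lemma Q_S k c t (j : 'I_n) : Q k c j.+1 t = Q k c j t && Pgood k c t j.
Proof.
apply/forallP/andP => [H|[/forallP H1 H2] x].
  split; last by move: (H j); rewrite ltnSn.
  by apply/forallP => x; apply/implyP => h; move: (H x); rewrite ltnS ltnW.
rewrite ltnS leq_eqVlt; case: eqP => [/val_inj -> //|_] /=.
exact: H1.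
Qed.


Definition cntQ k c j := (\sum_(t : code) (Q k c j t : nat))%N.

Lemma rowj_sub t j : rowj t j \subset U j.
Proof. by apply/subsetP => y; rewrite !inE => /andP[]. Qed.

Lemma subD_sub (r A : {set 'I_n}) : (r :\: A \subset A) = (r \subset A).
Proof.
apply/subsetP/subsetP => H y.
- move=> yr; case: (boolP (y \in A)) => // yA.
  have := H y; rewrite in_setD yA yr => /(_ isT) h.
  by rewrite h in yA.
- by rewrite in_setD => /andP[nyA yr]; move: (H y yr) nyA => ->.
Qed.

Lemma sum_sub_pow (A : {set 'I_n}) : (\sum_(r : {set 'I_n}) ((r \subset A) : nat))%N = 2 ^ #|A|.
Proof.
rewrite (sum_nat_bool (fun r : {set 'I_n} => r \subset A)) -card_powerset.
by apply: eq_card => r; rewrite !inE; rewrite ?powersetE.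
Qed.

Lemma step k c (j : 'I_n) :
  (2 ^ #|U j| * cntQ k c j.+1 <= (c * 'C(#|U j|, #|U j|./2)) * cntQ k c j)%N.
Proof.
set W := c * _.
have E : (\sum_(p : code * {set 'I_n}) (((p.2 \subset U j) && Q k c j.+1 (upd p.1 j p.2)) : nat)
        = \sum_(p : code * {set 'I_n}) (((p.2 \subset U j) && Q k c j.+1 p.1) : nat))%N.
  rewrite [RHS](reindex_inj (inv_inj (phiK j))) /=.
  apply: eq_bigr => [[t r]] _ /=.
  by rewrite subUset rowj_sub subD_sub.
have R : (\sum_(p : code * {set 'I_n}) (((p.2 \subset U j) && Q k c j.+1 p.1) : nat)
         = 2 ^ #|U j| * cntQ k c j.+1)%N.
  rewrite -(pair_bigA _ (fun (t : code) (r : {set 'I_n}) => (((r \subset U j) && Q k c j.+1 t) : nat))) /=.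
  rewrite /cntQ big_distrr /=; apply: eq_bigr => t _.
  rewrite -sum_sub_pow big_distrl /=; apply: eq_bigr => r _.
  by case: (r \subset U j); case: (Q _ _ _ _).
rewrite -R -E.
rewrite -(pair_bigA _ (fun (t : code) (r : {set 'I_n}) => (((r \subset U j) && Q k c j.+1 (upd t j r)) : nat))) /=.
rewrite /cntQ big_distrr /=; apply: leq_sum => t _.
under eq_bigr => r _ do rewrite Q_S Q_upd.
case: (boolP (Q k c j t)) => Qt; last first.
  by rewrite big1 // => r _; rewrite andbF.
rewrite /= muln1 /W.
set e := (\sum_(y : 'I_n) (((y < j)%N && ~~ t (y, j)) : nat))%N.
apply: (@leq_trans (\sum_(r : {set 'I_n}) (((r \subset U j) && ((k <= #|r| + e) && (#|r| + e < k + c))) : nat))); last exact: window_count.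
apply: leq_sum => r _.
case: (boolP (r \subset U j)) => rU //=.
by rewrite /Pgood od_upd_j.
Qed.


Lemma sum_gt m L : (\sum_(i < L) ((m < i)%N : nat) = L - m.+1)%N.
Proof.
elim: L => [|L IH]; first by rewrite big_ord0.
rewrite big_ord_recr /= IH; case: ltnP => h /=; lia.
Qed.

Lemma cardU (j : 'I_n) : #|U j| = n - j.+1.
Proof.
rewrite -(sum_gt j n) -(sum_nat_bool (fun y : 'I_n => (j < y)%N)).
by [].
Qed.

Lemma step2 k c (j : 'I_n) :
  (cntQ k c j.+1 ^ 2 * (n - j) <= c ^ 2 * cntQ k c j ^ 2)%N.
Proof.
have S := step k c j; rewrite cardU in S.
set N := n - j.+1 in S.
have hN : n - j = N.+1 by rewrite /N; have := ltn_ord j; lia.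
rewrite hN.
set q' := cntQ k c j.+1 in S *; set q := cntQ k c j in S *.
set B := 'C(N, N./2) in S.
have Bc : (B ^ 2 * N.+1 <= 4 ^ N)%N by apply: bin_center.
have S2 : ((2 ^ N * q') ^ 2 <= (c * B * q) ^ 2)%N by rewrite leq_exp2r.
have H4 : (4 ^ N * (q' ^ 2 * N.+1) <= 4 ^ N * (c ^ 2 * q ^ 2))%N.
  have -> : (4 ^ N * (q' ^ 2 * N.+1) = (2 ^ N * q') ^ 2 * N.+1)%N.
    have h4 : 4 ^ N = 2 ^ N * 2 ^ N by rewrite -expnMn.
    by rewrite h4; ring.
  apply: (@leq_trans ((c * B * q) ^ 2 * N.+1)); first by rewrite leq_mul2r S2 orbT.
  have -> : ((c * B * q) ^ 2 * N.+1 = (c ^ 2 * q ^ 2) * (B ^ 2 * N.+1))%N by ring.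
  by rewrite mulnC leq_mul2r Bc orbT.
by rewrite leq_pmul2l ?expn_gt0 in H4.
Qed.

Lemma cntQ0 k c : cntQ k c 0 = 2 ^ (n * n).
Proof.
rewrite /cntQ (eq_bigr (fun _ => 1%N)); last by move=> t _; rewrite /Q; apply/eqP; rewrite eqb1; apply/forallP.
by rewrite sum1_card card_ffun card_prod card_ord card_bool.
Qed.

Lemma iterQ k c j : (j <= n)%N ->
  (cntQ k c j ^ 2 * n`! <= c ^ (2 * j) * cntQ k c 0 ^ 2 * (n - j)`!)%N.
Proof.
elim: j => [|j IH] hj; first by rewrite subn0 muln0 expn0 mul1n.
have jn : (j < n)%N by [].
have S := step2 k c (Ordinal jn); rewrite /= in S.
have IH' := IH (ltnW hj).
have hf : (n - j)`! = (n - j) * (n - j.+1)`!.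
  by have -> : n - j = (n - j.+1).+1 by lia.
rewrite hf in IH'.
have pos : (0 < n - j)%N by lia.
rewrite -(@leq_pmul2l (n - j)) //.
apply: (@leq_trans (c ^ 2 * (cntQ k c j ^ 2 * n`!))).
  have -> : ((n - j) * (cntQ k c j.+1 ^ 2 * n`!) = (cntQ k c j.+1 ^ 2 * (n - j)) * n`!)%N by ring.
  have -> : (c ^ 2 * (cntQ k c j ^ 2 * n`!) = (c ^ 2 * cntQ k c j ^ 2) * n`!)%N by ring.
  by rewrite leq_mul2r S orbT.
apply: (@leq_trans (c ^ 2 * (c ^ (2 * j) * cntQ k c 0 ^ 2 * ((n - j) * (n - j.+1)`!)))).
  by rewrite leq_mul2l IH' orbT.
have -> : (2 * j.+1 = 2 + 2 * j)%N by lia.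
rewrite expnD; apply: eq_leq; ring.
Qed.


Lemma sum_neq (x : 'I_n) : (\sum_(y : 'I_n) ((y != x) : nat))%N = n - 1.
Proof.
rewrite (sum_nat_bool (fun y : 'I_n => y != x)).
have -> : #|[set y : 'I_n | y != x]| = #|[set~ x]| by apply: eq_card => y; rewrite !inE.
by rewrite cardsC1 card_ord subn1.
Qed.

Lemma in_out t x : (\sum_(y : 'I_n) (tour t y x : nat) + od t x)%N = n - 1.
Proof.
rewrite /od -big_split -(sum_neq x) /=; apply: eq_bigr => y _.
rewrite /tour; case: ltngtP => h /=.
- by case: (t _) => /=; case: eqP => // e; rewrite e ltnn in h.
- by case: (t _) => /=; case: eqP => // e; rewrite e ltnn in h.
- by rewrite (val_inj h) eqxx.
Qed.

Lemma arcs_out1 (D : digraph n) x : ~~ D x x ->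
  arcs_out D [set x] = (\sum_(y : 'I_n) (D x y : nat))%N.
Proof.
move=> Dxx; rewrite /arcs_out.
rewrite -(sum_nat_bool (fun p : 'I_n * 'I_n => [&& p.1 \in [set x], p.2 \notin [set x] & D p.1 p.2])).
rewrite -(pair_bigA _ (fun a b : 'I_n => ([&& a \in [set x], b \notin [set x] & D a b] : nat))) /=.
rewrite (bigD1 x) //= [X in (_ + X)%N]big1 ?addn0; last first.
  by move=> a ax; apply: big1 => b _; rewrite inE (negbTE ax).
apply: eq_bigr => y _; rewrite !inE eqxx /=.
by case: eqP => // ->; rewrite (negbTE Dxx).
Qed.

Lemma arcs_outC1 (D : digraph n) x : ~~ D x x ->
  arcs_out D (~: [set x]) = (\sum_(y : 'I_n) (D y x : nat))%N.
Proof.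
move=> Dxx; rewrite /arcs_out.
rewrite -(sum_nat_bool (fun p : 'I_n * 'I_n => [&& p.1 \in ~: [set x], p.2 \notin ~: [set x] & D p.1 p.2])).
rewrite -(pair_bigA _ (fun a b : 'I_n => ([&& a \in ~: [set x], b \notin ~: [set x] & D a b] : nat))) /=.
apply: eq_bigr => a _.
rewrite (bigD1 x) //= big1 ?addn0; last first.
  by move=> b bx; rewrite !inE negbK (negbTE bx) andbF.
rewrite !inE eqxx /=.
by case: eqP => [->|] //=; rewrite (negbTE Dxx).
Qed.

Lemma strong_good k c t : n = (2 * k + c)%N -> (0 < k)%N -> arc_strong k (tour t) -> Q k c n t.
Proof.
move=> hn hk H; apply/forallP => x; apply/implyP => _.
have Dxx : ~~ tour t x x by rewrite /tour ltnn.
have n2 : (1 < n)%N by lia.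
have s1 : [set x] != set0 by apply/set0Pn; exists x; rewrite inE.
have s2 : [set x] != setT.
  apply/negP => /eqP h; have := cardsT 'I_n; rewrite -h cards1 card_ord; lia.
have s3 : ~: [set x] != set0.
  apply/negP => /eqP h; have := cardsC1 x; rewrite h cards0 card_ord; lia.
have s4 : ~: [set x] != setT.
  by apply/negP => /eqP h; have := in_setT x; rewrite -h !inE eqxx.
have h1 := H _ s1 s2; have h2 := H _ s3 s4.
rewrite arcs_out1 // in h1; rewrite arcs_outC1 // in h2.
have h1' : (k <= od t x)%N by exact: h1.
move: (in_out t x) h2; rewrite /Pgood; set s := (\sum_(y : 'I_n) _)%N; lia.
Qed.

Definition fixable k c M t := [exists Xs : M.-tuple {set 'I_n}, Q k c n (xorc t Xs)].

Lemma card_sets : #|{: {set 'I_n}}| = 2 ^ n.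
Proof.
transitivity (2 ^ #|[set: 'I_n]|); last by rewrite cardsT card_ord.
rewrite -(sum_sub_pow [set: 'I_n]) -sum1_card.
by apply: eq_bigr => r _; rewrite subsetT.
Qed.

Lemma count_fix k c M :
  (\sum_(t : code) (fixable k c M t : nat) <= (2 ^ n) ^ M * cntQ k c n)%N.
Proof.
apply: (@leq_trans (\sum_(t : code) \sum_(Xs : M.-tuple {set 'I_n}) (Q k c n (xorc t Xs) : nat))).
  apply: leq_sum => t _; case: (boolP (fixable k c M t)) => // /existsP [Xs HX].
  by rewrite (bigD1 Xs) //= HX.
rewrite exchange_big /=.
apply: (@leq_trans (\sum_(Xs : M.-tuple {set 'I_n}) cntQ k c n)).
  apply: leq_sum => Xs _; rewrite /cntQ (reindex_inj (inv_inj (@xorcK Xs))) /=.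
  by apply: eq_leq; apply: eq_bigr => t _; rewrite xorcK.
by rewrite sum_nat_const card_tuple card_sets.
Qed.

End Comb.

Section RealFacts.
Local Open Scope R_scope.

Lemma INR_expn (m e : nat) : INR (m ^ e)%N = INR m ^ e.
Proof.
elim: e => [|e IH]; first by rewrite expn0.
by rewrite expnS mulnE mult_INR IH.
Qed.

Lemma exp_pow x e : exp x ^ e = exp (INR e * x).
Proof.
elim: e => [|e IH]; first by rewrite /= Rmult_0_l exp_0.
rewrite S_INR -tech_pow_Rmult IH -exp_plus; congr exp.
by rewrite Rmult_plus_distr_r Rmult_1_l Rplus_comm.
Qed.

Lemma key_real (n : nat) : (0 < n)%N -> (INR n + 1) ^ n <= 3 * INR n ^ n.
Proof.
move=> hn.
have pn : 0 < INR n by apply: lt_0_INR; apply/ltP.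
have -> : INR n + 1 = INR n * (1 + / INR n).
  by rewrite Rmult_plus_distr_l Rmult_1_r Rinv_r //; apply: Rgt_not_eq.
rewrite Rpow_mult_distr Rmult_comm.
apply: Rmult_le_compat_r; first by apply: pow_le; lra.
apply: Rle_trans (exp_le_3).
have -> : exp 1 = exp (/ INR n) ^ n by rewrite exp_pow Rinv_r //; apply: Rgt_not_eq.
apply: pow_incr; split.
  have := Rinv_0_lt_compat _ pn; lra.
apply: Rlt_le; apply: exp_ineq1; apply: Rgt_not_eq; apply: Rinv_0_lt_compat pn.
Qed.

End RealFacts.

Lemma succ_pow (n : nat) : (n.+1 ^ n <= 3 * n ^ n)%N.
Proof.
case: n => [|n]; first by [].
apply/leP; apply: INR_le.
rewrite mulnE mult_INR !INR_expn S_INR.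
have -> : INR 3 = IZR 3 by simpl; lra.
by apply: key_real.
Qed.

Lemma pow_fact (n : nat) : (n ^ n <= 3 ^ n * n`!)%N.
Proof.
elim: n => [|n IH]; first by [].
rewrite factS !expnS.
apply: (@leq_trans (n.+1 * (3 * n ^ n))).
  by rewrite leq_mul2l succ_pow orbT.
apply: (@leq_trans (n.+1 * (3 * (3 ^ n * n`!)))).
  by rewrite leq_mul2l leq_mul2l IH !orbT.
apply: eq_leq; ring.
Qed.

Lemma exists_unfixable n k c M : (0 < n)%N -> (4 ^ M * (4 * c ^ 2) <= n)%N ->
  exists t : code n, ~~ fixable k c M t.
Proof.
move=> n0 hM.
set A := (2 ^ n) ^ M.
set q := cntQ n k c n.
set Z := 2 ^ (n * n).
have hq : (q ^ 2 * n`! <= c ^ (2 * n) * Z ^ 2)%N.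
  by have := iterQ k c (leqnn n); rewrite subnn fact0 muln1 cntQ0.
have hA : (A ^ 2 * 4 ^ n * c ^ (2 * n) = (4 ^ M * (4 * c ^ 2)) ^ n)%N.
  have e1 : (A ^ 2 = (4 ^ M) ^ n)%N.
    rewrite /A -!expnM (_ : 4 = 2 ^ 2)%N // -!expnM; congr expn; ring.
  have e2 : (c ^ (2 * n) = (c ^ 2) ^ n)%N by rewrite expnM.
  by rewrite e1 e2 [RHS]expnMn [in RHS]expnMn mulnA.
have hF := pow_fact n.
have h1 : ((A * q) ^ 2 * 4 ^ n * n`! <= 3 ^ n * n`! * Z ^ 2)%N.
  apply: (@leq_trans ((A ^ 2 * 4 ^ n) * (c ^ (2 * n) * Z ^ 2))).
    have -> : ((A * q) ^ 2 * 4 ^ n * n`! = (A ^ 2 * 4 ^ n) * (q ^ 2 * n`!))%N by ring.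
    by rewrite leq_mul2l hq orbT.
  have -> : (A ^ 2 * 4 ^ n * (c ^ (2 * n) * Z ^ 2) = (A ^ 2 * 4 ^ n * c ^ (2 * n)) * Z ^ 2)%N by ring.
  rewrite hA; rewrite leq_mul2r; apply/orP; right.
  apply: leq_trans hF; by rewrite leq_exp2r.
have h2 : ((A * q) ^ 2 * 4 ^ n <= 3 ^ n * Z ^ 2)%N.
  rewrite -(@leq_pmul2r n`!) ?fact_gt0 //.
  by apply: (leq_trans h1); apply: eq_leq; ring.
have Zpos : (0 < Z)%N by rewrite expn_gt0.
have h3 : (A * q < Z)%N.
  rewrite -(@ltn_exp2r _ _ 2) //; rewrite ltnNge; apply/negP => h.
  have : (4 ^ n * Z ^ 2 <= 3 ^ n * Z ^ 2)%N.
    apply: leq_trans h2; rewrite mulnC leq_mul2r h orbT //.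
  rewrite leq_mul2r => /orP [/eqP|].
    by move=> h0; move: Zpos; rewrite -(@ltn_exp2r 0 Z 2) // h0.
  by rewrite leqNgt ltn_exp2r.
have hc := count_fix n k c M.
case: (boolP [forall t : code n, fixable k c M t]) => [/forallP H|/forallPn [t Ht]]; last by exists t.
move: (leq_ltn_trans hc h3).
rewrite (eq_bigr (fun _ => 1%N)); last by move=> t _; rewrite H.
by rewrite sum1_card card_ffun card_prod card_ord card_bool ltnn.
Qed.

Section RealMain.
Local Open Scope R_scope.

Lemma lnV (m c : nat) : (0 < c)%N ->
  ln (INR (4 ^ m * (4 * c ^ 2))%N) = 2 * INR m * ln 2 + 2 * ln (INR (2 * c)).
Proof.
move=> c0.
have -> : (4 ^ m * (4 * c ^ 2) = 2 ^ (2 * m) * (2 * c) ^ 2)%N.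
  by rewrite expnM (_ : 2 ^ 2 = 4)%N // expnMn.
have h2 : INR 2 = 2 by simpl; lra.
have pc : 0 < INR (2 * c) by apply: lt_0_INR; apply/ltP; rewrite muln_gt0.
rewrite mulnE mult_INR !INR_expn ln_mult; last first.
- by apply: pow_lt.
- by apply: pow_lt; rewrite h2; lra.
rewrite !ln_pow // ?h2; last lra.
rewrite (mult_INR 2 m) h2.
lra.
Qed.

Lemma bound_iff (m c n : nat) : (0 < c)%N -> (0 < n)%N ->
  (INR m <= / 2 * log2 (INR n) - log2 (INR (2 * c))) <-> (4 ^ m * (4 * c ^ 2) <= n)%N.
Proof.
move=> c0 n0.
have L0 : 0 < ln 2 by rewrite -ln_1; apply: ln_increasing; lra.
have pn : 0 < INR n by apply: lt_0_INR; apply/ltP.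
have pV : 0 < INR (4 ^ m * (4 * c ^ 2))%N.
  by apply: lt_0_INR; apply/ltP; rewrite muln_gt0 expn_gt0 /= muln_gt0 expn_gt0 c0.
have hV := lnV m c0.
rewrite /log2.
set a := ln (INR n). set b := ln (INR (2 * c)) in hV *. set L := ln 2 in hV L0 *.
set u := / L.
have hu : L * u = 1 by rewrite /u Rinv_r //; lra.
rewrite /Rdiv -/u.
split=> H.
- case: (leqP (4 ^ m * (4 * c ^ 2)) n) => // hlt; exfalso.
  have : a < ln (INR (4 ^ m * (4 * c ^ 2))%N).
    apply: ln_increasing => //; apply: lt_INR; exact/ltP.
  rewrite hV => hlt2.
  have e1 : a * u * L = a by rewrite Rmult_assoc (Rmult_comm u) hu Rmult_1_r.
  have e2 : b * u * L = b by rewrite Rmult_assoc (Rmult_comm u) hu Rmult_1_r.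
  nra.
- have : ln (INR (4 ^ m * (4 * c ^ 2))%N) <= a.
    case: (ltngtP (4 ^ m * (4 * c ^ 2)) n) H => // h _.
    + apply: Rlt_le; apply: ln_increasing => //; apply: lt_INR; exact/ltP.
    + by rewrite h; apply: Rle_refl.
  rewrite hV => hle.
  have e1 : a * u * L = a by rewrite Rmult_assoc (Rmult_comm u) hu Rmult_1_r.
  have e2 : b * u * L = b by rewrite Rmult_assoc (Rmult_comm u) hu Rmult_1_r.
  nra.
Qed.

End RealMain.

Delimit Scope R_scope with R.

Lemma arc_strong_ext n k (D D' : digraph n) :
  (forall x y, D x y = D' x y) -> arc_strong k D -> arc_strong k D'.
Proof.
move=> E H V1 h1 h2; have := H V1 h1 h2.
by rewrite /arcs_out (eq_card (B := [set p | [&& p.1 \in V1, p.2 \notin V1 & D' p.1 p.2]])) // => p; rewrite !inE E.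
Qed.

Lemma par_pad n (Xs : seq {set 'I_n}) j x y : par (Xs ++ nseq j set0) x y = par Xs x y.
Proof. by rewrite /par count_cat count_nseq !inE /= mul0n addn0. Qed.

Lemma part1 c : (0 < c)%N -> forall k, (0 < k)%N -> (2 * c ^ 2 <= k)%N ->
  exists T : digraph (2 * k + c),
    is_tournament T /\ sinv_gt k T (/ 2 * log2 (INR (2 * k + c)) - log2 (INR (2 * c)))%R.
Proof.
move=> c0 k k0 hk.
set n := (2 * k + c)%N.
have n0 : (0 < n)%N by rewrite /n; lia.
have hn4 : (4 * c ^ 2 <= n)%N by rewrite /n; move: hk; set C := c ^ 2; lia.
have c40 : (0 < 4 * c ^ 2)%N by rewrite muln_gt0 expn_gt0 c0.
set d := n %/ (4 * c ^ 2).
have d0 : (0 < d)%N by rewrite divn_gt0.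
set M := trunc_log 4 d.
have hM : (4 ^ M * (4 * c ^ 2) <= n)%N.
  by rewrite -leq_divRL //; apply: trunc_logP.
have [t Ht] := @exists_unfixable n k c M n0 hM.
exists (tour t); split; first exact: tour_tournament.
move=> m [Xs [hs Has]].
case: (Rlt_or_le (/ 2 * log2 (INR n) - log2 (INR (2 * c)))%R (INR m)) => // hle; exfalso.
have hm : (4 ^ m * (4 * c ^ 2) <= n)%N by apply/(bound_iff m c0 n0).
have mM : (m <= M)%N.
  by apply: trunc_log_max => //; rewrite leq_divRL.
set Xs' := Xs ++ nseq (M - m) set0.
have hsz : size Xs' == M by rewrite size_cat size_nseq hs; apply/eqP; lia.
have As : arc_strong k (tour (xorc t Xs')).
  apply: (arc_strong_ext _ Has) => x y.
  by rewrite -invert_tour !invert_seqE par_pad.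
have Hq := strong_good (erefl n) k0 As.
move/negP: Ht; apply; apply/existsP; exists (Tuple hsz); exact: Hq.
Qed.

Theorem theorem5p7 :
  forall c : nat, 0 < c ->
    (exists K : nat, forall k : nat, 0 < k -> K <= k ->
       exists T : digraph (2 * k + c),
         is_tournament T /\
         sinv_gt k T (/ 2 * log2 (INR (2 * k + c)) - log2 (INR (2 * c)))%R)
    /\
    (forall B : nat, exists k : nat, 0 < k /\ mprime_gt k (2 * k + c) B).
Proof.
move=> c c0; split.
  by exists (2 * c ^ 2)%N; apply: part1.
move=> B.
set k := (2 * c ^ 2 * 4 ^ B)%N.
have k0 : (0 < k)%N by rewrite /k !muln_gt0 !expn_gt0 c0.
have hk : (2 * c ^ 2 <= k)%N by rewrite /k leq_pmulr // expn_gt0.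
have [T [HT Hs]] := part1 c0 k0 hk.
exists k; split => //; exists T; split => // m Hm.
have n0 : (0 < 2 * k + c)%N by lia.
have hB : (INR B <= / 2 * log2 (INR (2 * k + c)) - log2 (INR (2 * c)))%R.
  apply/(bound_iff B c0 n0).
  rewrite /k; set C := c ^ 2; set F := 4 ^ B.
  have : (4 * C * F <= 2 * (2 * C * F))%N by lia.
  move=> h; apply: leq_trans (_ : 2 * (2 * C * F) <= _)%N; last by lia.
  by apply: leq_trans h; rewrite mulnC mulnA.
have := Hs m Hm.
by move=> h; apply: Rle_lt_trans hB h.
Qed.
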